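(* For every $x\in\mathbb{C}^n$, the element $(\mathrm{J}(0,n),x)\in\mathfrak{aff}(n,\mathbb{C})$ is strongly adjoint $c$-real.
   Context: $\mathrm{J}(\lambda,m)$ denotes the $m\times m$ Jordan block with $\lambda$ on the diagonal, $1$ on the superdiagonal and $0$ elsewhere. $\mathrm{Aff}(n,\mathbb{C})$ is the group of pairs $(A,v)$, $A\in\mathrm{GL}(n,\mathbb{C})$, $v\in\mathbb{C}^n$, identified with the matrices $\begin{pmatrix}A&v\\0&1\end{pmatrix}\in\mathrm{GL}(n+1,\mathbb{C})$ (so $(A,v)(B,w)=(AB,Aw+v)$, identity $(I_n,0)$). Its Lie algebra $\mathfrak{aff}(n,\mathbb{C})$ consists of pairs $(X,u)$, $X\in M_n(\mathbb{C})$, $u\in\mathbb{C}^n$, identified with $\begin{pmatrix}X&u\\0&0\end{pmatrix}$. The adjoint action is matrix conjugation: $\mathrm{Ad}_{(A,v)}(X,u)=(AXA^{-1},\,Au-AXA^{-1}v)$. Complex conjugation acts entrywise. An element $Y\in\mathfrak{aff}(n,\mathbb{C})$ is strongly adjoint $c$-real if there exists $h\in\mathrm{Aff}(n,\mathbb{C})$ with $h\overline{h}=(I_n,0)$ and $\mathrm{Ad}_h(Y)=-\overline{Y}$. *)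

(* Defs.v *)
(* The complex numbers C are modelled as  R[i] = complex R
   (mathcomp-real-closed) for an arbitrary  R : realType  (every realType is
   isomorphic to the reals, so this is exactly C). *)
From HB Require Import structures.
From mathcomp Require Import all_boot all_order all_algebra.
From mathcomp Require Import reals.
From mathcomp Require Import complex.
Set Implicit Arguments. Unset Strict Implicit. Unset Printing Implicit Defensive.
Import Order.TTheory GRing.Theory Num.Theory.
Local Open Scope ring_scope.
Local Open Scope complex_scope.

Definition jordan_block (R : realType) (lam : R[i]) (m : nat) : 'M[R[i]]_m :=
  \matrix_(a < m, b < m) (if b == a :> nat then lam
                          else if b == a.+1 :> nat then 1 else 0).

Definition conjM (R : realType) (p q : nat) (M : 'M[R[i]]_(p, q)) : 'M[R[i]]_(p, q) :=
  map_mx (fun z => z^*) M.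

(* Elements of Aff(n,C): pairs (A, v) with A invertible; identified with
   block matrices [[A, v],[0, 1]].  Product: (A,v)(B,w) = (AB, Aw + v). *)
Definition aff_mul (R : realType) (n : nat)
  (g h : 'M[R[i]]_n * 'cV[R[i]]_n) : 'M[R[i]]_n * 'cV[R[i]]_n :=
  (g.1 *m h.1, g.1 *m h.2 + g.2).

Definition aff_conj (R : realType) (n : nat)
  (g : 'M[R[i]]_n * 'cV[R[i]]_n) : 'M[R[i]]_n * 'cV[R[i]]_n :=
  (conjM g.1, conjM g.2).

Definition aff_one (R : realType) (n : nat) : 'M[R[i]]_n * 'cV[R[i]]_n :=
  (1%:M, 0).

Definition aff_Ad (R : realType) (n : nat)
  (g : 'M[R[i]]_n * 'cV[R[i]]_n) (Y : 'M[R[i]]_n * 'cV[R[i]]_n)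
  : 'M[R[i]]_n * 'cV[R[i]]_n :=
  let AXAi := g.1 *m Y.1 *m invmx g.1 in
  (AXAi, g.1 *m Y.2 - AXAi *m g.2).

Definition strongly_adjoint_creal (R : realType) (n : nat)
  (Y : 'M[R[i]]_n * 'cV[R[i]]_n) : Prop :=
  exists h : 'M[R[i]]_n * 'cV[R[i]]_n,
    [/\ h.1 \in unitmx,
        aff_mul h (aff_conj h) = aff_one R n &
        aff_Ad h Y = (- conjM Y.1, - conjM Y.2)].

(* Main.v *)
Require Import Defs.
From HB Require Import structures.
From mathcomp Require Import all_boot all_order all_algebra.
From mathcomp Require Import reals.
From mathcomp Require Import complex.
From mathcomp Require Import ring.
Set Implicit Arguments. Unset Strict Implicit. Unset Printing Implicit Defensive.
Import Order.TTheory GRing.Theory Num.Theory.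
Local Open Scope ring_scope.
Local Open Scope complex_scope.

Lemma sum_pick_lt (R : realType) (N k : nat) (f : 'I_N -> R[i]) (hk : (k < N)%N) :
  \sum_(b : 'I_N) (if (b : nat) == k then f b else 0) = f (Ordinal hk).
Proof.
rewrite (bigD1 (Ordinal hk)) //= eqxx big1 ?addr0 // => b hb.
case: eqP => // hbk; case/eqP: hb; apply: val_inj; rewrite /= hbk //.
Qed.

Lemma sum_pick_ge (R : realType) (N k : nat) (f : 'I_N -> R[i]) : (N <= k)%N ->
  \sum_(b : 'I_N) (if (b : nat) == k then f b else 0) = 0.
Proof.
move=> hk; rewrite big1 // => b _; case: eqP => // hbk.
by move: (ltn_ord b); rewrite hbk ltnNge hk.
Qed.

Lemma cM (R : realType) (a b : R[i]) : (a * b)^*%C = a^*%C * b^*%C.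
Proof. exact: rmorphM. Qed.
Lemma cN (R : realType) (a : R[i]) : (- a)^*%C = - a^*%C.
Proof. exact: rmorphN. Qed.
Lemma cD (R : realType) (a b : R[i]) : (a + b)^*%C = a^*%C + b^*%C.
Proof. exact: rmorphD. Qed.
Lemma c0 (R : realType) : (0 : R[i])^*%C = 0.
Proof. exact: rmorph0. Qed.
Lemma c_sign (R : realType) k : ((-1) ^+ k : R[i])^*%C = (-1) ^+ k.
Proof. exact: rmorph_sign. Qed.

Lemma sgnS (R : realType) (k : nat) : (-1) ^+ k.+1 = - ((-1) ^+ k : R[i]).
Proof. by rewrite exprS mulN1r. Qed.

Lemma sgn2 (R : realType) (k : nat) : (-1) ^+ k * (-1) ^+ k = (1 : R[i]).
Proof. by rewrite -exprD -signr_odd oddD addbb. Qed.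

Lemma conjM_J (R : realType) (n : nat) : conjM (jordan_block (0 : R[i]) n) = jordan_block 0 n.
Proof.
apply/matrixP => a b; rewrite !mxE.
by case: ifP => _; [rewrite conjc0| case: ifP => _; rewrite ?conjc1 ?conjc0].
Qed.

Lemma J_E (R : realType) (n : nat) a b :
  jordan_block (0 : R[i]) n a b = if (b : nat) == a.+1 then 1 else 0.
Proof.
rewrite mxE; case: eqP => [->|_] //; by rewrite eqn_leq ltnn andbF.
Qed.

Theorem lemma3p4 (R : realType) (n : nat) (x : 'cV[R[i]]_n) :
  strongly_adjoint_creal (jordan_block 0 n, x).
Proof.
case: n x => [|n] x.
  exists (1%:M, 0); split; first exact: unitmx1.
    by congr (_, _); apply/matrixP => -[].
  by congr (_, _); apply/matrixP => -[].
pose xl := x ord_max 0.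
pose c : R[i] := if xl == 0 then 1 else - (-1) ^+ n * xl^*%C / xl.
have hc : c * c^*%C = 1.
  rewrite /c; case: ifP => hx; first by rewrite rmorph1 mulr1.
  have hx' : xl != 0 by rewrite hx.
  have hx'' : xl^*%C != 0 by rewrite conjc_eq0.
  rewrite !cM cN c_sign conjcK conjc_inv.
  transitivity (((-1) ^+ n * (-1) ^+ n) * ((xl^*%C / xl^*%C) * (xl / xl))); first by ring.
  by rewrite sgn2 !divff // !mul1r.
have hl : xl^*%C + c * (-1) ^+ n * xl = 0.
  rewrite /c; case: ifP => hx; first by rewrite (eqP hx) conjc0 mulr0 addr0.
  have hx' : xl != 0 by rewrite hx.
  transitivity (xl^*%C * (1 - ((-1) ^+ n * (-1) ^+ n) * (xl / xl))); first by ring.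
  by rewrite sgn2 divff // mul1r subrr mulr0.
pose A : 'M[R[i]]_n.+1 := diag_mx (\row_(k < n.+1) (c * (-1) ^+ k)).
pose w (k : 'I_n.+1) := - (x k 0)^*%C - c * (-1) ^+ k * x k 0.
pose v : 'cV[R[i]]_n.+1 := \col_(k < n.+1) (if (k : nat) == 0%N then 0 else w (inord k.-1)).
have hAA : A *m conjM A = 1%:M.
  apply/matrixP => a b; rewrite mul_diag_mx !mxE.
  case: (eqVneq a b) => [->|ne]; last by rewrite !mulr0n c0 mulr0.
  rewrite !mulr1n cM c_sign.
  transitivity ((c * c^*%C) * ((-1) ^+ b * (-1) ^+ b)); first by ring.
  by rewrite hc sgn2 mul1r.
have hAJ : A *m jordan_block 0 n.+1 = - (jordan_block 0 n.+1 *m A).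
  apply/matrixP => a b; rewrite mul_diag_mx mul_mx_diag !mxE.
  case: eqP => [hb|_]; first by rewrite mulr0 mul0r oppr0.
  case: eqP => [hb|_]; last by rewrite mulr0 mul0r oppr0.
  rewrite hb sgnS; ring.
have hU : A \in unitmx by case: (mulmx1_unit hAA).
exists (A, v); split => //.
  rewrite /aff_mul /aff_conj /aff_one /=; congr (_, _) => //.
  apply/matrixP => k j; rewrite mul_diag_mx !mxE.
  case: k => [[|k] hk] /=.
    by rewrite -[((- 0)*i)%C]/(conjc (0 : R[i])) c0 mulr0 addr0.
  set y := x (inord k) 0.
  have wE : w (inord k) = - y^*%C - c * (-1) ^+ k * y by rewrite /w inordK // ltnW.
  rewrite wE !cD !cN !cM c_sign conjcK sgnS.
  transitivity ((c * c^*%C * ((-1) ^+ k * (-1) ^+ k) - 1) * y^*%C); first by ring.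
  by rewrite hc sgn2 mul1r subrr mul0r.
rewrite /aff_Ad /= hAJ mulNmx -mulmxA mulmxV // mulmx1 conjM_J.
congr (_, _); apply/matrixP => a b; rewrite ord1 mulNmx opprK mul_diag_mx !mxE.
rewrite (eq_bigr (fun b : 'I_n.+1 => if (b : nat) == a.+1 then v b 0 else 0)); last first.
  by move=> b' _; rewrite J_E; case: eqP; rewrite ?mul1r ?mul0r.
case: (ltnP a.+1 n.+1) => ha.
  rewrite (sum_pick_lt _ ha) mxE /= /w inord_val; ring.
rewrite sum_pick_ge // addr0.
have -> : a = ord_max by apply: val_inj => /=; move: (ltn_ord a) ha; rewrite !ltnS => h1 h2; apply/eqP; rewrite eqn_leq h1 h2.
by move/eqP: hl; rewrite addrC addr_eq0 => /eqP.
Qed.
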